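(* Let $J^A_{k,n}$ be the number of maximal configurations resistant to altruists of length $n$ with exactly $k$ occupied lots (the empty configuration of length $0$ being counted once). Then, as formal power series, $$\sum_{n\ge 0}\sum_{k\ge 0} J^A_{k,n}x^ky^n = \frac{1+xy+x^2y^2+x^2y^3+x^3y^4}{1-x^2y^3-x^2y^4-x^3y^5} = \frac{1+xy+x^2y^2+x^2y^3+x^3y^4}{(1-xy^2-x^2y^3)(1+xy^2)}.$$
   Context: A configuration of length $n\ge 0$ is a binary string $c_1c_2\cdots c_n$; $c_k=1$ means lot $k$ is occupied by a house, $c_k=0$ that it is empty. A house at position $k$ is blocked if $2\le k\le n-1$ and $c_{k-1}=c_{k+1}=1$ (lots beyond the ends never obstruct sunlight). A configuration is permissible if no house is blocked; maximal if it is permissible and, for every $k$ with $c_k=0$, setting $c_k=1$ yields a non-permissible string. A maximal configuration is resistant to altruists if, for every $k$ with $c_k=0$, setting $c_k=1$ makes some house at a position $l\neq k$ blocked. *)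

(* Defs.v *)
From mathcomp Require Import all_boot all_order all_algebra.
Set Implicit Arguments. Unset Strict Implicit. Unset Printing Implicit Defensive.
Import GRing.Theory Num.Theory.

(* Configurations are bit sequences c; lot k (1-indexed in the paper) is
   [nth false c (k-1)] here, i.e. positions are 0-indexed: i < size c. *)

Definition blocked (c : seq bool) (i : nat) : bool :=
  [&& 0 < i, i.+1 < size c, nth false c i, nth false c i.-1 & nth false c i.+1].

Definition permissible (c : seq bool) : bool :=
  [forall i : 'I_(size c), ~~ blocked c i].

Definition build (c : seq bool) (i : nat) : seq bool := set_nth false c i true.

Definition maximal (c : seq bool) : bool :=
  permissible c &&
  [forall i : 'I_(size c), ~~ nth false c i ==> ~~ permissible (build c i)].

Definition resistant (c : seq bool) : bool :=
  maximal c &&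
  [forall i : 'I_(size c), ~~ nth false c i ==>
     [exists l : 'I_(size c), (val l != val i) && blocked (build c i) l]].

Definition JA (k n : nat) : nat :=
  #|[set c : n.-tuple bool | resistant c && (count id c == k)]|.

(* Bivariate formal power series with integer coefficients, as coefficient
   functions  f k n = [x^k y^n] f, with the Cauchy product. *)
Local Open Scope ring_scope.
Definition fps2 := nat -> nat -> int.

Definition fps_mul (f g : fps2) : fps2 := fun k n =>
  (\sum_(i < k.+1) \sum_(j < n.+1) f i j * g (k - i)%N (n - j)%N)%R.

Definition mono (c : int) (a b : nat) : fps2 := fun k n =>
  if (k == a) && (n == b) then c else 0%R.
Definition fps_add (f g : fps2) : fps2 := fun k n => (f k n + g k n)%R.

Definition JA_series : fps2 := fun k n => Posz (JA k n).

Definition numer : fps2 :=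
  fps_add (mono 1 0 0) (fps_add (mono 1 1 1) (fps_add (mono 1 2 2)
    (fps_add (mono 1 2 3) (mono 1 3 4)))).
Definition denom : fps2 :=
  fps_add (mono 1 0 0) (fps_add (mono (-1) 2 3) (fps_add (mono (-1) 2 4)
    (mono (-1) 3 5))).
Definition denom1 : fps2 :=
  fps_add (mono 1 0 0) (fps_add (mono (-1) 1 2) (mono (-1) 2 3)).
Definition denom2 : fps2 := fps_add (mono 1 0 0) (mono 1 1 2).

(* Main.v *)
Require Import Defs.
From mathcomp Require Import all_boot all_order all_algebra.
From mathcomp Require Import zify.
From mathcomp Require Import ring.
From Stdlib Require Import FunctionalExtensionality.
Set Implicit Arguments. Unset Strict Implicit. Unset Printing Implicit Defensive.

Fixpoint allseq (n : nat) : seq (seq bool) :=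
  if n is n'.+1 then map (cons false) (allseq n') ++ map (cons true) (allseq n')
  else [:: [::]].

Lemma cons_inj (b : bool) : injective (cons b).
Proof. by move=> x y H; exact: (congr1 behead H). Qed.

Lemma mem_allseq n s : (s \in allseq n) = (size s == n).
Proof.
elim: n s => [|n IH] [|b s]; rewrite /= ?in_cons ?in_nil ?orbF //.
- by rewrite mem_cat; apply/negP => /orP [] /mapP [x _].
rewrite mem_cat eqSS -IH; case: b.
- have -> : (true :: s \in [seq false :: i | i <- allseq n]) = false.
    by apply/negP => /mapP [x _].
  by rewrite (mem_map (@cons_inj true)).
- have -> : (false :: s \in [seq true :: i | i <- allseq n]) = false.
    by apply/negP => /mapP [x _].
  by rewrite (mem_map (@cons_inj false)) orbF.
Qed.

Lemma uniq_allseq n : uniq (allseq n).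
Proof.
elim: n => [|n IH] //=.
rewrite cat_uniq !map_inj_uniq ?IH //; try exact: cons_inj.
rewrite andbT /=; apply/hasPn => x /mapP [y _ ->].
by apply/negP => /mapP [z _].
Qed.

Definition Hk (p : pred (seq bool)) (k n : nat) : nat :=
  count (fun s => p s && (count id s == k)) (allseq n).

Lemma Hk_S p k n : Hk p k n.+1 =
  Hk (fun s => p (false :: s)) k n +
  (if k is k'.+1 then Hk (fun s => p (true :: s)) k' n else 0).
Proof.
rewrite /Hk /= count_cat !count_map; congr (_ + _).
case: k => [|k]; last by apply: eq_count => s /=.
by rewrite (@eq_count _ _ pred0) ?count_pred0 // => s /=; rewrite andbF.
Qed.

Lemma Hk_0 p k : Hk p k 0 = ((p [::]) && (k == 0)).
Proof. by rewrite /Hk /= addn0 eq_sym. Qed.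

Lemma Hk_ext p p' k n : p =1 p' -> Hk p k n = Hk p' k n.
Proof. by move=> E; apply: eq_count => s; rewrite E. Qed.

Lemma Hk_guard (c : bool) P k n : Hk (fun s => c && P s) k n = if c then Hk P k n else 0.
Proof.
case: c; first by [].
by rewrite /Hk (@eq_count _ _ pred0) ?count_pred0.
Qed.

Definition pre (w s : seq bool) := take (size w) s == w.

Lemma Hk_prefix w q k n :
  Hk (fun s => pre w s && q (drop (size w) s)) k n =
  if (size w <= n) && (count id w <= k) then Hk q (k - count id w) (n - size w) else 0.
Proof.
elim: w q k n => [|b w IH] q k n.
  by rewrite /= !subn0; apply: eq_count => s; rewrite /pre take0 drop0.
case: n => [|n].
  by rewrite Hk_0 /pre.
rewrite Hk_S.
have E : forall b', (fun s => pre (b :: w) (b' :: s) && q (drop (size (b :: w)) (b' :: s)))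
   =1 (fun s => (b' == b) && (pre w s && q (drop (size w) s))).
  by move=> b' s; rewrite /pre /= eqseq_cons andbA.
case: b E => E; case: k => [|k];
  rewrite ?(Hk_ext _ _ (E false)) ?(Hk_ext _ _ (E true)) !Hk_guard /= ?IH ?addn0 //.
all: try by rewrite andbF.
all: try by rewrite ltnS subSS.
Qed.

Definition cond (a b x y z : bool) := ~~ (b && x && y) && (x || (a && b) || (y && z)).
Fixpoint chk (a b : bool) (s : seq bool) : bool :=
  match s with
  | [::] => true
  | x :: s' => cond a b x (nth false s' 0) (nth false s' 1) && chk b x s'
  end.

Fixpoint okb (s : seq bool) : bool :=
  match s with
  | [::] => true
  | [:: false] => true
  | [:: false; true] => true
  | false :: true :: true :: t => okb t
  | false :: false :: true :: true :: t => okb t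
  | false :: true :: false :: true :: true :: t => okb t
  | _ => false
  end.

Definition top (s : seq bool) : bool :=
  match s with
  | [::] => true
  | [:: true] => true
  | true :: true :: t => okb t
  | false :: true :: true :: t => okb t
  | true :: false :: true :: true :: t => okb t
  | _ => false
  end.

Lemma A_okb t : ~~ nth false t 0 && chk true true t = okb t.
Proof.
move: {2}(size t).+1 (ltnSn (size t)) => m; elim: m t => [|m IH] t //.
case: t => [|[] t] //=.
case: t => [|[] t] //=.
- case: t => [|[] t] //=.
  + by move=> Hs; rewrite /cond /= ?andbT -IH //; lia.
  + case: t => [|[] t] //=; case: t => [|[] t] //=.
    by move=> Hs; rewrite /cond /= ?andbT -IH //; lia.
- case: t => [|[] t] //=; case: t => [|[] t] //=.
  by move=> Hs; rewrite /cond /= ?andbT -IH //; lia.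
Qed.

Lemma top_chk c : chk false false c = top c.
Proof.
case: c => [|[] t] //=.
- case: t => [|[] t] //=.
  + by rewrite /cond /= ?andbT -A_okb.
  + case: t => [|[] t] //=; case: t => [|[] t] //=.
    by rewrite /cond /= ?andbT -A_okb.
- case: t => [|[] t] //=; case: t => [|[] t] //=.
  by rewrite /cond /= ?andbT -A_okb.
Qed.

Lemma Hk_sum (p : pred (seq bool)) (ps : seq (pred (seq bool))) k n :
  (forall s, (p s : nat) = \sum_(q <- ps) (q s : nat)) ->
  Hk p k n = \sum_(q <- ps) Hk q k n.
Proof.
move=> H; rewrite /Hk; elim: (allseq n) => [|x l IH] /=.
  by rewrite big1.
rewrite IH big_split /=; congr (_ + _).
case: (count id x == k); last by rewrite andbF big1 // => q _; rewrite andbF.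
by rewrite andbT H; apply: eq_bigr => q _; rewrite andbT.
Qed.

Definition nilp' (s : seq bool) : bool := if s is [::] then true else false.

Lemma Hk_nil k n : Hk nilp' k n = ((k == 0) && (n == 0)).
Proof.
case: n => [|n]; first by rewrite Hk_0 /= andbT.
rewrite Hk_S /= andbF.
rewrite (@Hk_ext _ pred0); last by [].
case: k => [|k]; rewrite /Hk count_pred0 //.
Qed.

Definition piece (w : seq bool) (q : pred (seq bool)) : pred (seq bool) :=
  fun s => pre w s && q (drop (size w) s).

Lemma okb_split s : (okb s : nat) = \sum_(q <- [:: piece [::] nilp'; piece [:: false] nilp';
   piece [:: false; true] nilp'; piece [:: false; true; true] okb;
   piece [:: false; false; true; true] okb; piece [:: false; true; false; true; true] okb]) (q s : nat).
Proof.
rewrite !big_cons big_nil /piece /pre.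
case: s => [|[] [|[] [|[] [|[] [|[] s]]]]] //=.
all: by rewrite ?take0 ?drop0 ?eqxx /= ?add0n ?addn0.
Qed.

Lemma top_split s : (top s : nat) = \sum_(q <- [:: piece [::] nilp'; piece [:: true] nilp';
   piece [:: true; true] okb; piece [:: false; true; true] okb;
   piece [:: true; false; true; true] okb]) (q s : nat).
Proof.
rewrite !big_cons big_nil /piece /pre.
case: s => [|[] [|[] [|[] [|[] [|[] s]]]]] //=.
all: by rewrite ?take0 ?drop0 ?eqxx /= ?add0n ?addn0.
Qed.

Lemma nth_build c i j : nth false (build c i) j = (j == i) || nth false c j.
Proof. by rewrite /build nth_set_nth /=; case: eqP. Qed.

Lemma size_build c i : i < size c -> size (build c i) = size c.
Proof. by rewrite /build size_set_nth => H; lia. Qed.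

Lemma nth_size c j : nth false c j -> j < size c.
Proof. by move=> H; rewrite ltnNge; apply/negP => /(nth_default false); rewrite H. Qed.

Definition P c i := ~~ blocked c i &&
  [|| nth false c i, (1 < i) && nth false c i.-2 && nth false c i.-1
    | nth false c i.+1 && nth false c i.+2].

Lemma res_P c : resistant c = [forall i : 'I_(size c), P c i].
Proof.
apply/idP/idP.
- case/andP => /andP [Hp _] Hr; apply/forallP => i.
  have Hb := forallP Hp i; have := forallP Hr i.
  rewrite /P Hb /=; case Hci: (nth false c i) => //= /existsP [l /andP [Hli Hbl]].
  have Hl := forallP Hp l.
  move: Hbl; rewrite /blocked size_build ?ltn_ord // !nth_build.
  case/and5P => H0 Hs H1 H2 H3.
  case: (eqVneq (nat_of_ord l) i.+1) => E1.
    rewrite E1 in H1 H3; rewrite (_ : (i.+1 == i) = false) in H1; last by lia.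
    rewrite (_ : (i.+2 == i) = false) in H3; last by lia.
    by rewrite /= in H1 H3; rewrite H1 H3 orbT.
  case: (eqVneq (nat_of_ord l).+1 i) => E2.
    rewrite (negbTE Hli) /= in H1.
    rewrite (_ : ((nat_of_ord l).-1 == i) = false) /= in H2; last by lia.
    have -> : 1 < i by lia.
    by rewrite -E2 /= H1 H2.
  rewrite (negbTE Hli) /= in H1.
  rewrite (_ : ((nat_of_ord l).-1 == i) = false) /= in H2; last by lia.
  rewrite (negbTE E2) /= in H3.
  by move: Hl; rewrite /blocked H0 H1 H2 H3 Hs.
- move=> HP.
  have Hp : permissible c.
    by apply/forallP => i; have := forallP HP i; case/andP.
  have Hr : [forall i : 'I_(size c), ~~ nth false c i ==>
     [exists l : 'I_(size c), (val l != val i) && blocked (build c i) l]].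
    apply/forallP => i; apply/implyP => Hci.
    have := forallP HP i; rewrite /P (negbTE Hci) /= => /andP [_ /orP [] H].
    + case/andP: H => /andP [H1 H2] H3.
      have Hl : i.-1 < size c by have := ltn_ord i; lia.
      apply/existsP; exists (Ordinal Hl); rewrite /= (_ : (i.-1 != i) = true); last by lia.
      rewrite /blocked size_build ?ltn_ord // !nth_build /=.
      rewrite (_ : i.-1.+1 = nat_of_ord i); last by lia.
      rewrite eqxx H3 /= orbT /=. 
      rewrite H2 ?orbT ?andbT.
      apply/andP; split; [lia | have := ltn_ord i; lia].
    + case/andP: H => H1 H2.
      have Hl : i.+1 < size c by exact: nth_size.
      have Hl2 : i.+2 < size c by exact: nth_size.
      apply/existsP; exists (Ordinal Hl); rewrite /= (_ : (i.+1 != i) = true); last by lia.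
      rewrite /blocked size_build ?ltn_ord // !nth_build /= eqxx H1 H2 !orbT /=.
      by rewrite Hl2.
  rewrite /resistant /maximal Hp Hr !andbT /=.
  apply/forallP => i; apply/implyP => Hci.
  have /existsP [l /andP [_ Hbl]] := implyP (forallP Hr i) Hci.
  apply/negP => /forallP Hpb.
  have Hl : val l < size (build c i) by rewrite size_build ?ltn_ord.
  by have := Hpb (Ordinal Hl); rewrite Hbl.
Qed.

Lemma chk_all c m : m <= size c ->
  chk ((1 < m) && nth false c m.-2) ((0 < m) && nth false c m.-1) (drop m c)
  = all (P c) (iota m (size c - m)).
Proof.
move=> Hm; move Hd: (size c - m) => d.
elim: d m Hm Hd => [|d IH] m Hm Hd.
  have -> : drop m c = [::] by apply/eqP; rewrite -size_eq0 size_drop Hd.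
  by [].
rewrite (drop_nth false); last by lia.
rewrite /= -(IH m.+1); [|lia|lia]; rewrite /=.
rewrite !nth_drop addn0 addn1 /=; congr (_ && _).
rewrite /cond /P /blocked.
case Hy: (nth false c m.+1); [rewrite (nth_size Hy)|];
  case: m {Hm Hd IH Hy} => [|m] /=; rewrite ?andbT ?andbF ?orbF //=;
  by case: (nth false c m); case: (nth false c m.+1); rewrite /= ?andbT ?andbF ?orbF.
Qed.

Lemma res_chk c : resistant c = chk false false c.
Proof.
rewrite res_P; have := chk_all (leq0n (size c)); rewrite /= drop0 subn0 => ->.
apply/forallP/allP => H.
- by move=> i; rewrite mem_iota add0n => /= Hi; exact: (H (Ordinal Hi)).
- by move=> i; apply: H; rewrite mem_iota /=.
Qed.
Lemma card_Hk (p : pred (seq bool)) k n :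
  #|[set c : n.-tuple bool | p c && (count id c == k)]| = Hk p k n.
Proof.
rewrite cardsE cardE /enum_mem size_filter -enumT.
rewrite -(count_map val (fun s => p s && (count id s == k))).
apply/permP/uniq_perm.
- by rewrite map_inj_uniq ?enum_uniq //; exact: val_inj.
- exact: uniq_allseq.
move=> s; rewrite mem_allseq; apply/mapP/idP.
- by case=> t _ ->; rewrite size_tuple.
- by move=> H; exists (Tuple H); rewrite ?mem_enum.
Qed.
Import GRing.Theory Num.Theory.
Local Open Scope ring_scope.

Definition sh (a b : nat) (f : fps2) : fps2 := fun k n =>
  if ((a <= k) && (b <= n))%N then f (k - a)%N (n - b)%N else 0.
Arguments sh : simpl never.
Arguments mono : simpl never.

Lemma sum_sel (F : nat -> int) k a :
  \sum_(i < k.+1) (if (k - i == a)%N then F (nat_of_ord i) else 0) =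
  if (a <= k)%N then F (k - a)%N else 0.
Proof.
case: leqP => Ha.
- have Hi : (k - a < k.+1)%N by lia.
  rewrite (bigD1 (Ordinal Hi)) //= ifT; last by apply/eqP; lia.
  rewrite big1 ?addr0 // => i Hne; rewrite ifF //; apply/eqP => E.
  move/eqP: Hne; apply; apply: val_inj => /=; have := ltn_ord i; lia.
- rewrite big1 // => i _; rewrite ifF //; apply/eqP; have := ltn_ord i; lia.
Qed.

Lemma mul_mono f c a b k n : fps_mul f (mono c a b) k n = sh a b f k n * c.
Proof.
rewrite /fps_mul.
rewrite (eq_bigr (fun i : 'I_k.+1 => if (k - i == a)%N then
   (if (b <= n)%N then f i (n - b)%N * c else 0) else 0)); last first.
  move=> i _; case: eqP => Hi.
  + rewrite -(sum_sel (fun j => f i j * c)); apply: eq_bigr => j _.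
    by rewrite /mono Hi eqxx /=; case: eqP => _; rewrite ?mulr0.
  + by rewrite big1 // => j _; rewrite /mono; case: eqP => //; rewrite mulr0.
rewrite (sum_sel (fun i => if (b <= n)%N then f i (n - b)%N * c else 0)).
by rewrite /sh; case: (a <= k)%N; case: (b <= n)%N; rewrite ?mul0r.
Qed.

Lemma mul_add f g h k n : fps_mul f (fps_add g h) k n = fps_mul f g k n + fps_mul f h k n.
Proof.
rewrite /fps_mul /fps_add -big_split; apply: eq_bigr => i _.
by rewrite -big_split; apply: eq_bigr => j _; rewrite mulrDr.
Qed.

Lemma sh_add a b f g k n : sh a b (fps_add f g) k n = sh a b f k n + sh a b g k n.
Proof. by rewrite /sh /fps_add; case: ifP; rewrite ?addr0. Qed.

Lemma sh_sh a b c d f k n : sh a b (sh c d f) k n = sh (Nat.add a c) (Nat.add b d) f k n.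
Proof.
rewrite /sh !plusE.
case: (leqP a k) => Ha; case: (leqP b n) => Hb /=; 
 case: (leqP c (k - a)) => Hc; case: (leqP d (n - b)) => Hd /=;
 case: (leqP (a + c) k) => Hac; case: (leqP (b + d) n) => Hbd //=; try lia.
by rewrite !subnDA.
Qed.

Lemma sh_mono a b c a' b' k n : sh a b (mono c a' b') k n = mono c (Nat.add a a') (Nat.add b b') k n.
Proof.
rewrite /sh /mono !plusE.
case: (leqP a k) => Ha; case: (leqP b n) => Hb /=;
 case: (eqVneq (k - a)%N a') => E1; case: (eqVneq (n - b)%N b') => E2;
 case: (eqVneq k (a + a')%N) => E3; case: (eqVneq n (b + b')%N) => E4 //=; lia.
Qed.

Lemma mono_opp a b k n : mono (-1) a b k n = - mono 1 a b k n.
Proof. by rewrite /mono; case: ifP; rewrite ?oppr0. Qed.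


Lemma sh0 f k n : sh 0 0 f k n = f k n.
Proof. by rewrite /sh !subn0. Qed.

Lemma final (G J : fps2) :
 (forall k n, G k n = fps_add (mono 1 0 0) (fps_add (mono 1 0 1) (fps_add (mono 1 1 2)
     (fps_add (sh 2 3 G) (fps_add (sh 2 4 G) (sh 3 5 G))))) k n) ->
 (forall k n, J k n = fps_add (mono 1 0 0) (fps_add (mono 1 1 1)
     (fps_add (sh 2 2 G) (fps_add (sh 2 3 G) (sh 3 4 G)))) k n) ->
 forall k n, fps_mul J denom k n = numer k n.
Proof.
move=> HG HJ.
have EG := functional_extensionality _ _ (fun k => functional_extensionality _ _ (HG k)).
have EJ := functional_extensionality _ _ (fun k => functional_extensionality _ _ (HJ k)).
have GS : forall a b k n, sh a b G k n = 
   mono 1 a b k n + (mono 1 a (Nat.add b 1) k n + (mono 1 (Nat.add a 1) (Nat.add b 2) k n +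
   (sh (Nat.add a 2) (Nat.add b 3) G k n + (sh (Nat.add a 2) (Nat.add b 4) G k n +
    sh (Nat.add a 3) (Nat.add b 5) G k n)))).
  move=> a b k n; rewrite {1}EG !sh_add !sh_mono !sh_sh.
  by rewrite !PeanoNat.Nat.add_0_r.
move=> k n.
rewrite /denom !mul_add !mul_mono !mulr1 !mulrN1 sh0 EJ.
rewrite /fps_add !sh_add !sh_mono !sh_sh /=.
rewrite (GS 2 2) (GS 2 3) (GS 3 4) /=.
rewrite /numer /fps_add.
ring.
Qed.

Lemma d12 k n : fps_mul denom1 denom2 k n = denom k n.
Proof.
rewrite /denom2 mul_add !mul_mono sh0 !mulr1 /denom1 !sh_add !sh_mono /=.
rewrite /denom /fps_add !mono_opp.
ring.
Qed.

Lemma final2 (J : fps2) k n : fps_mul J (fps_mul denom1 denom2) k n = fps_mul J denom k n.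
Proof.
have E := functional_extensionality _ _ (fun k => functional_extensionality _ _ (d12 k)).
by rewrite E.
Qed.

Definition Gz : fps2 := fun k n => Posz (Hk okb k n).

Lemma Hk_piece w q k n : Posz (Hk (piece w q) k n) =
  sh (count id w) (size w) (fun k n => Posz (Hk q k n)) k n.
Proof. by rewrite /piece Hk_prefix /sh andbC; case: ifP. Qed.

Lemma EN : (fun k n => Posz (Hk nilp' k n)) = mono 1 0 0.
Proof.
apply: functional_extensionality => k; apply: functional_extensionality => n.
by rewrite Hk_nil /mono; case: ifP.
Qed.

Lemma G_rec k n : Gz k n = fps_add (mono 1 0 0) (fps_add (mono 1 0 1) (fps_add (mono 1 1 2)
     (fps_add (sh 2 3 Gz) (fps_add (sh 2 4 Gz) (sh 3 5 Gz))))) k n.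
Proof.
rewrite /Gz (@Hk_sum okb _ k n okb_split) !big_cons big_nil addn0 !PoszD !Hk_piece EN /=.
by rewrite !sh_mono /=.
Qed.

Lemma J_rec k n : JA_series k n = fps_add (mono 1 0 0) (fps_add (mono 1 1 1)
     (fps_add (sh 2 2 Gz) (fps_add (sh 2 3 Gz) (sh 3 4 Gz)))) k n.
Proof.
rewrite /JA_series /JA.
have -> : [set c : n.-tuple bool | resistant c && (count id c == k)] =
          [set c : n.-tuple bool | top c && (count id c == k)].
  by apply/setP => c; rewrite !inE res_chk top_chk.
rewrite card_Hk (@Hk_sum top _ k n top_split) !big_cons big_nil addn0 !PoszD !Hk_piece EN /=.
by rewrite !sh_mono /=.
Qed.

Theorem mainTheorem5 :
  (forall k n, fps_mul JA_series denom k n = numer k n) /\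
  (forall k n, fps_mul JA_series (fps_mul denom1 denom2) k n = numer k n).
Proof.
have H := final G_rec J_rec.
split => k n; first exact: H.
by rewrite final2.
Qed.
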